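(* Let $c$ be a step speed function and $q\in\mathbb R$. Fix $z,w>0$. There exists a constant $C=C(z,w,c(\cdot-q))<\infty$ such that for all $0<\delta\le1$ and all $0\le a\le z$, $$\Gamma^q((a,0),(z,\delta))-\Gamma^q((a,0),(z,0))\le C\sqrt\delta,$$ and for all $0\le b\le w$, $$\Gamma^q((-b,b),(-w,w+\delta))-\Gamma^q((-b,b),(-w,w))\le C\sqrt\delta.$$
   Context: A step speed function is $c(x)=\sum_{m=1}^{L-1}r_m\mathbf 1_{(a_m,a_{m+1})}(x)+\sum_{m=2}^{L-1}\min\{r_{m-1},r_m\}\mathbf 1_{\{a_m\}}(x)$ with $-\infty=a_1<\dots<a_L=+\infty$ and $r_m>0$. $\mathcal W=\{(x,y):y\ge0,x\ge-y\}$; $\gamma(x,y)=(\sqrt{x+y}+\sqrt y)^2$. For points $P$ and $Q\in P+\mathcal W$, $\Gamma^q(P,Q)=\sup\int_0^1\frac{\gamma(\mathbf x'(s))}{c(x_1(s)-q)}ds$, the supremum over continuous piecewise $C^1$ paths $\mathbf x=(x_1,x_2):[0,1]\to\mathbb R^2$ with $\mathbf x(0)=P$, $\mathbf x(1)=Q$ and $\mathbf x'(s)\in\mathcal W$ wherever defined. *)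

(* Defs.v *)
From Stdlib Require Import Reals Lra.
Open Scope R_scope.

(** * Step speed functions
    Finite breakpoints b 0 < b 1 < ... < b (n-1)  (these are a_2,...,a_{L-1},
    so n = L-2), and rates r 0, ..., r n (these are r_1,...,r_{L-1}).
    On the open interval between consecutive breakpoints (with -oo/+oo at the
    ends) the speed is the corresponding rate; at a breakpoint b j it is the
    minimum of the two neighbouring rates r j, r (j+1). *)

Fixpoint bp_count (n : nat) (b : nat -> R) (x : R) : nat :=
  match n with
  | O => O
  | S k => (bp_count k b x + (if Rlt_dec (b k) x then 1 else 0))%nat
  end.

Fixpoint bp_index (n : nat) (b : nat -> R) (x : R) : option nat :=
  match n with
  | O => None
  | S k => if Req_EM_T x (b k) then Some k else bp_index k b x
  end.

Definition step_speed (n : nat) (b r : nat -> R) (x : R) : R :=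
  match bp_index n b x with
  | Some j => Rmin (r j) (r (S j))
  | None => r (bp_count n b x)
  end.

Definition is_step_speed_data (n : nat) (b r : nat -> R) : Prop :=
  (forall j : nat, (S j < n)%nat -> b j < b (S j)) /\
  (forall m : nat, (m <= n)%nat -> 0 < r m).

Definition inW (x y : R) : Prop := 0 <= y /\ - y <= x.

Definition gamma (x y : R) : R := (sqrt (x + y) + sqrt y) ^ 2.

Fixpoint rsum (k : nat) (g : nat -> R) : R :=
  match k with
  | O => 0
  | S j => rsum j g + g j
  end.

Definition is_partition01 (k : nat) (p : nat -> R) : Prop :=
  p O = 0 /\ p k = 1 /\ (forall i : nat, (i < k)%nat -> p i < p (S i)).

(** upper Darboux sums of f over [0,1] (bounds M i need not be least) *)
Definition upper_sums (f : R -> R) (U : R) : Prop :=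
  exists (k : nat) (p M : nat -> R),
    is_partition01 k p /\
    (forall i : nat, (i < k)%nat ->
       forall s, p i <= s <= p (S i) -> f s <= M i) /\
    U = rsum k (fun i => (p (S i) - p i) * M i).

Definition is_glb (E : R -> Prop) (m : R) : Prop :=
  (forall x, E x -> m <= x) /\ (forall l, (forall x, E x -> l <= x) -> l <= m).

Definition upper_integral01 (f : R -> R) (I : R) : Prop :=
  is_glb (upper_sums f) I.

Definition cont_on01 (g : R -> R) : Prop :=
  forall s, 0 <= s <= 1 -> forall eps, eps > 0 ->
    exists del, del > 0 /\
      forall t, 0 <= t <= 1 -> Rabs (t - s) < del -> Rabs (g t - g s) < eps.

Definition admissible_path (x1 x2 d1 d2 : R -> R) : Prop :=
  cont_on01 x1 /\ cont_on01 x2 /\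
  exists (k : nat) (p : nat -> R),
    is_partition01 k p /\
    forall i : nat, (i < k)%nat ->
      (forall s, p i < s < p (S i) ->
         derivable_pt_lim x1 s (d1 s) /\ derivable_pt_lim x2 s (d2 s) /\
         inW (d1 s) (d2 s)) /\
      (exists e1 e2 : R -> R, continuity e1 /\ continuity e2 /\
         forall s, p i < s < p (S i) -> e1 s = d1 s /\ e2 s = d2 s).

(** The integral is the upper Darboux integral, which for
    this (bounded, upper semicontinuous off finitely many points) integrand
    coincides with the Lebesgue integral. *)
Definition path_value (c : R -> R) (q : R) (P Q : R * R) (v : R) : Prop :=
  exists x1 x2 d1 d2 : R -> R,
    admissible_path x1 x2 d1 d2 /\
    x1 0 = fst P /\ x2 0 = snd P /\ x1 1 = fst Q /\ x2 1 = snd Q /\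
    upper_integral01 (fun s => gamma (d1 s) (d2 s) / c (x1 s - q)) v.

Definition is_Gamma (c : R -> R) (q : R) (P Q : R * R) (G : R) : Prop :=
  is_lub (path_value c q P Q) G.

(* Main.v *)
Require Import Defs.
From Stdlib Require Import Reals Lra Lia FunctionalExtensionality.
Open Scope R_scope.

Inductive ub (f : R -> R) : R -> R -> R -> Prop :=
| ub_one a b M : a < b -> (forall s, a <= s <= b -> f s <= M) -> ub f a b ((b-a)*M)
| ub_cons a b c M U : a < b -> (forall s, a <= s <= b -> f s <= M) -> ub f b c U ->
    ub f a c ((b-a)*M + U).

Lemma ub_trans f a b c U1 U2 : ub f a b U1 -> ub f b c U2 -> ub f a c (U1+U2).
Proof.
  intros H1; revert c U2; induction H1; intros c' U2 H2.
  - apply ub_cons; auto.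
  - replace ((b-a)*M + U + U2) with ((b-a)*M + (U+U2)) by ring.
    apply ub_cons; auto.
Qed.

Lemma rsum_shift k g : rsum (S k) g = g 0%nat + rsum k (fun i => g (S i)).
Proof.
  induction k; simpl in *. ring. rewrite IHk. ring.
Qed.

Lemma ub_sums f a c U : ub f a c U -> exists k p M, p 0%nat = a /\ p k = c /\
  (forall i, (i<k)%nat -> p i < p (S i)) /\
  (forall i, (i<k)%nat -> forall s, p i <= s <= p (S i) -> f s <= M i) /\
  U = rsum k (fun i => (p (S i) - p i) * M i).
Proof.
  induction 1.
  - exists 1%nat, (fun i => match i with O => a | _ => b end), (fun _ => M).
    repeat split; auto.
    + intros i Hi. assert (i = 0%nat) by lia. subst. auto.
    + intros i Hi. assert (i = 0%nat) by lia. subst. auto.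
    + simpl. ring.
  - destruct IHub as (k & p & M' & Hp0 & Hk & Hs & Hb & HU).
    exists (S k), (fun i => match i with O => a | S j => p j end),
      (fun i => match i with O => M | S j => M' j end).
    repeat split; auto.
    + intros i Hi. destruct i. rewrite Hp0; auto. apply Hs; lia.
    + intros i Hi s Hs'. destruct i. rewrite Hp0 in Hs'. auto. apply (Hb i); auto; lia.
    + rewrite rsum_shift. rewrite Hp0, HU. reflexivity.
Qed.

Lemma ub_upper f U : ub f 0 1 U -> upper_sums f U.
Proof.
  intros H. destruct (ub_sums _ _ _ _ H) as (k & p & M & H0 & Hk & Hs & Hb & HU).
  exists k, p, M. repeat split; auto.
Qed.

Lemma incr_bound (H g : R -> R) (a b m : R) : 0 <= a -> a < b -> b <= 1 -> cont_on01 H ->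
  (forall s, a < s < b -> derivable_pt_lim H s (g s)) ->
  (forall s, a < s < b -> m <= g s) -> m * (b - a) <= H b - H a.
Proof.
  intros Ha Hab Hb HC HD Hm.
  apply Rle_plus_epsilon; intros eps Heps.
  destruct (HC a ltac:(lra) (eps/4) ltac:(lra)) as (da & Hda & Ha').
  destruct (HC b ltac:(lra) (eps/4) ltac:(lra)) as (db & Hdb & Hb').
  set (eta := Rmin (Rmin da db) (Rmin ((b-a)/3) (eps/(4*(Rabs m+1)))) / 2).
  assert (Hm0 : 0 < Rabs m + 1) by (pose proof (Rabs_pos m); lra).
  assert (He0 : 0 < eta).
  { unfold eta. apply Rmult_lt_0_compat; [|lra].
    repeat apply Rmin_pos; try lra. apply Rdiv_lt_0_compat; lra. }
  assert (He1 : eta < da /\ eta < db /\ eta < (b-a)/3 /\ eta < eps/(4*(Rabs m+1))).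
  { unfold eta in *. pose proof (Rmin_l (Rmin da db) (Rmin ((b - a) / 3) (eps / (4 * (Rabs m + 1))))).
    pose proof (Rmin_r (Rmin da db) (Rmin ((b - a) / 3) (eps / (4 * (Rabs m + 1))))).
    pose proof (Rmin_l da db). pose proof (Rmin_r da db).
    pose proof (Rmin_l ((b - a) / 3) (eps / (4 * (Rabs m + 1)))).
    pose proof (Rmin_r ((b - a) / 3) (eps / (4 * (Rabs m + 1)))). lra. }
  destruct He1 as (E1 & E2 & E3 & E4).
  destruct (MVT_cor2 H g (a+eta) (b-eta)) as (c & Hc1 & Hc2); [lra| |].
  { intros c Hc. apply HD. lra. }
  assert (X1 := Ha' (a+eta) ltac:(lra) ltac:(rewrite Rabs_right; lra)).
  assert (X2 := Hb' (b-eta) ltac:(lra) ltac:(rewrite Rabs_left; lra)).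
  assert (Hgc := Hm c ltac:(lra)).
  apply Rabs_def2 in X1. apply Rabs_def2 in X2.
  assert (X3 : m * (b - a - 2*eta) <= g c * (b - a - 2*eta)) by (apply Rmult_le_compat_r; lra).
  assert (X4 : Rabs m * eta <= eps / 4).
  { apply Rle_trans with (eps/(4*(Rabs m+1)) * (Rabs m + 1)).
    assert (Rabs m * eta <= eta * (Rabs m + 1)) by nra. nra.
    right. field. lra. }
  assert (X5 : - (Rabs m) <= m) by (pose proof (Rle_abs (-m)); rewrite Rabs_Ropp in *; lra).
  assert (m*eta <= Rabs m * eta) by (apply Rmult_le_compat_r; [lra| apply Rle_abs]).
  replace (b - eta - (a + eta)) with (b - a - 2*eta) in Hc1 by ring. lra.
Qed.

Lemma middle f H g al be e' du h : 0 <= al -> be <= 1 -> cont_on01 H ->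
  (forall s, al < s < be -> derivable_pt_lim H s (g s) /\ f s <= g s) ->
  (forall x y, al <= x <= be -> al <= y <= be -> Rabs (x - y) < du -> Rabs (g x - g y) < e') ->
  0 < h -> h < du ->
  forall m t, al < t -> t + INR (S m) * h < be ->
  exists U, ub f t (t + INR (S m) * h) U /\
    U <= H (t + INR (S m) * h) - H t + 2 * e' * (INR (S m) * h).
Proof.
  intros Hal Hbe HC Hd Huc Hh Hhd.
  assert (step : forall t, al < t -> t + h < be ->
    exists U, ub f t (t + h) U /\ U <= H (t+h) - H t + 2 * e' * h).
  { intros t Ht1 Ht2. exists ((t + h - t) * (g t + e')). split.
    - apply ub_one. lra. intros s Hs.
      assert (Hs' : al < s < be) by lra.
      destruct (Hd s Hs') as [_ Hf].
      assert (Q := Huc s t ltac:(lra) ltac:(lra) ltac:(rewrite Rabs_right; lra)).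
      apply Rabs_def2 in Q. lra.
    - assert (Q := incr_bound H g t (t+h) (g t - e') ltac:(lra) ltac:(lra) ltac:(lra) HC).
      assert (Q' : (g t - e') * (t + h - t) <= H (t + h) - H t).
      { apply Q. intros s Hs; apply Hd; lra.
        intros s Hs. assert (Q2 := Huc s t ltac:(lra) ltac:(lra) ltac:(rewrite Rabs_right; lra)).
        apply Rabs_def2 in Q2. lra. }
      replace (t + h - t) with h in * by ring. nra. }
  induction m; intros t Ht1 Ht2.
  - replace (INR 1 * h) with h in * by (simpl; ring). apply step; auto.
  - rewrite (S_INR (S m)) in *.
    destruct (step t Ht1 ltac:(pose proof (pos_INR (S m)); nra)) as (U1 & HU1 & HU1').
    destruct (IHm (t+h) ltac:(lra) ltac:(lra)) as (U2 & HU2 & HU2').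
    exists (U1 + U2).
    replace (t + (INR (S m) + 1) * h) with (t + h + INR (S m) * h) by ring.
    split. eapply ub_trans; eauto. lra.
Qed.

Lemma gbound g al be : al <= be -> continuity g ->
  exists B, forall s, al <= s <= be -> - B <= g s <= B.
Proof.
  intros Hab Hg.
  destruct (continuity_ab_maj g al be Hab (fun c _ => Hg c)) as (x1 & Hx1 & _).
  destruct (continuity_ab_maj (fun x => - g x) al be Hab) as (x2 & Hx2 & _).
  { intros c _. apply (continuity_opp g Hg c). }
  exists (Rmax (g x1) (- g x2)). intros s Hs.
  pose proof (Hx1 s Hs). pose proof (Hx2 s Hs).
  pose proof (Rmax_l (g x1) (- g x2)). pose proof (Rmax_r (g x1) (- g x2)). lra.
Qed.

Lemma piece f H g al be eps : 0 <= al -> al < be -> be <= 1 -> cont_on01 H -> continuity g ->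
  (forall s, al < s < be -> derivable_pt_lim H s (g s) /\ f s <= g s) -> 0 < eps ->
  exists U, ub f al be U /\ U <= H be - H al + eps.
Proof.
  intros Hal Hab Hbe HC Hg Hd Heps.
  set (L := be - al). assert (HLdef : L = be - al) by reflexivity.
  destruct (gbound g al be ltac:(lra) Hg) as (B & HB).
  assert (HB0 : 0 <= B) by (pose proof (HB al ltac:(lra)); lra).
  set (e' := eps / (4 * L)).
  assert (He' : 0 < e') by (unfold e', L; apply Rdiv_lt_0_compat; lra).
  destruct (@Heine_cor1 g al be Hab (fun x _ => Hg x) (mkposreal e' He')) as ([du Hdu] & _ & Huc).
  simpl in Huc.
  set (K0 := Rabs (f al) + Rabs (f be) + 4 * B + 2 * e' + 1).
  assert (HK0 : 0 < K0) by (unfold K0; pose proof (Rabs_pos (f al)); pose proof (Rabs_pos (f be)); lra).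
  set (eta0 := Rmin (Rmin (du / L) (eps / (2 * L * K0))) (1/3)).
  assert (Heta0 : 0 < eta0).
  { unfold eta0, L. repeat apply Rmin_pos; try apply Rdiv_lt_0_compat; try lra.
    apply Rmult_lt_0_compat; lra. }
  destruct (archimed_cor1 eta0 Heta0) as (N & HN & HN0).
  assert (HNp : 0 < INR N) by (apply lt_0_INR; auto).
  assert (HNe : 1 < INR N * eta0).
  { apply Rmult_lt_compat_l with (r := INR N) in HN; auto.
    rewrite Rinv_r in HN; lra. }
  assert (Hl1 : eta0 <= du / L) by (unfold eta0; pose proof (Rmin_l (Rmin (du / L) (eps / (2 * L * K0))) (1/3)); pose proof (Rmin_l (du / L) (eps / (2 * L * K0))); lra).
  assert (Hl2 : eta0 <= eps / (2 * L * K0)) by (unfold eta0; pose proof (Rmin_l (Rmin (du / L) (eps / (2 * L * K0))) (1/3)); pose proof (Rmin_r (du / L) (eps / (2 * L * K0))); lra).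
  assert (Hl3 : eta0 <= 1/3) by (unfold eta0; apply Rmin_r).
  assert (HN3 : 3 < INR N) by nra.
  set (h := L / INR N).
  assert (Hh : 0 < h) by (unfold h, L; apply Rdiv_lt_0_compat; lra).
  assert (HhN : h * INR N = L) by (unfold h; field; lra).
  assert (HL : 0 < L) by (unfold L; lra).
  assert (Hhdu : h < du).
  { assert (h * 1 < h * (INR N * eta0)) by (apply Rmult_lt_compat_l; lra).
    assert (h * (INR N * eta0) <= L * (du / L)) by (rewrite <- Rmult_assoc, HhN; apply Rmult_le_compat_l; lra).
    replace (L * (du / L)) with du in * by (field; lra). lra. }
  assert (HhK : h * K0 <= eps / 2).
  { assert (h * K0 * 1 < h * K0 * (INR N * eta0)) by (apply Rmult_lt_compat_l; nra).
    assert (h * K0 * (INR N * eta0) <= K0 * L * (eps / (2 * L * K0))).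
    { replace (h * K0 * (INR N * eta0)) with (K0 * (h * INR N) * eta0) by ring. rewrite HhN.
      apply Rmult_le_compat_l; nra. }
    replace (K0 * L * (eps / (2 * L * K0))) with (eps/2) in * by (field; lra). lra. }
  destruct N as [|[|[|m]]].
  { simpl in HN3; lra. } { simpl in HN3; lra. } { simpl in HN3; lra. }
  assert (HLm : L = INR (S m) * h + 2 * h).
  { rewrite <- HhN. rewrite !S_INR. ring. }
  destruct (middle f H g al be e' du h Hal Hbe HC Hd Huc Hh Hhdu m (al + h))
    as (Um & HUm & HUm'); [lra| unfold L in HLm; lra |].
  assert (Hmh : 0 <= INR (S m) * h) by (pose proof (pos_INR (S m)); nra).
  set (t2 := al + h + INR (S m) * h) in *.
  assert (Ht2 : t2 = be - h) by (unfold t2, L in *; lra).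
  set (M1 := Rmax (f al) (g al + e')).
  set (M3 := Rmax (f be) (g be + e')).
  assert (U1 : ub f al (al + h) ((al + h - al) * M1)).
  { apply ub_one. lra. intros s Hs. destruct (Req_dec s al) as [->|Hne].
    apply Rmax_l. apply Rle_trans with (g al + e'); [|apply Rmax_r].
    destruct (Hd s ltac:(lra)) as [_ Hf].
    assert (Q := Huc s al ltac:(lra) ltac:(lra) ltac:(rewrite Rabs_right; lra)).
    apply Rabs_def2 in Q. lra. }
  assert (U3 : ub f t2 be ((be - t2) * M3)).
  { apply ub_one. lra. intros s Hs. destruct (Req_dec s be) as [->|Hne].
    apply Rmax_l. apply Rle_trans with (g be + e'); [|apply Rmax_r].
    destruct (Hd s ltac:(lra)) as [_ Hf].
    assert (Q := Huc s be ltac:(lra) ltac:(lra) ltac:(rewrite Rabs_left; lra)).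
    apply Rabs_def2 in Q. lra. }
  exists ((al + h - al) * M1 + (Um + (be - t2) * M3)).
  split. apply ub_trans with (al+h); auto. apply ub_trans with t2; auto.
  assert (I1 : - B * (al + h - al) <= H (al + h) - H al).
  { apply incr_bound with g; try lra; auto.
    intros s Hs; apply Hd; lra. intros s Hs; apply HB; lra. }
  assert (I3 : - B * (be - t2) <= H be - H t2).
  { apply incr_bound with g; try lra; auto.
    intros s Hs; apply Hd; lra. intros s Hs; apply HB; lra. }
  assert (M1b : M1 <= Rabs (f al) + B + e').
  { apply Rmax_lub. pose proof (Rle_abs (f al)); lra. pose proof (HB al ltac:(lra)); pose proof (Rabs_pos (f al)); lra. }
  assert (M3b : M3 <= Rabs (f be) + B + e').
  { apply Rmax_lub. pose proof (Rle_abs (f be)); lra. pose proof (HB be ltac:(lra)); pose proof (Rabs_pos (f be)); lra. }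
  replace (al + h - al) with h in * by ring.
  replace (be - t2) with h in * by lra.
  assert (h * M1 <= h * (Rabs (f al) + B + e')) by (apply Rmult_le_compat_l; lra).
  assert (h * M3 <= h * (Rabs (f be) + B + e')) by (apply Rmult_le_compat_l; lra).
  assert (2 * e' * (INR (S m) * h) <= eps / 2).
  { assert (INR (S m) * h <= L) by lra.
    assert (2 * e' * (INR (S m) * h) <= 2 * e' * L) by (apply Rmult_le_compat_l; lra).
    replace (2 * e' * L) with (eps/2) in * by (unfold e'; field; lra). lra. }
  unfold K0 in HhK. nra.
Qed.

Lemma part_mono k p : is_partition01 k p -> forall i j, (i <= j <= k)%nat -> p i <= p j.
Proof.
  intros (H0 & H1 & Hs) i j Hij. induction j.
  - assert (i = 0%nat) by lia. subst. lra.
  - destruct (Nat.eq_dec i (S j)). subst; lra.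
    pose proof (Hs j ltac:(lia)). pose proof (IHj ltac:(lia)). lra.
Qed.

Lemma part_range k p : is_partition01 k p -> forall i, (i <= k)%nat -> 0 <= p i <= 1.
Proof.
  intros Hp i Hi. pose proof (part_mono k p Hp 0 i ltac:(lia)).
  pose proof (part_mono k p Hp i k ltac:(lia)). destruct Hp as (Q0 & Q1 & _). lra.
Qed.

Lemma UB f H k p : is_partition01 k p -> cont_on01 H ->
  (forall i, (i<k)%nat -> exists g, continuity g /\
      forall s, p i < s < p (S i) -> derivable_pt_lim H s (g s) /\ f s <= g s) ->
  forall v, upper_integral01 f v -> v <= H 1 - H 0.
Proof.
  intros Hp HC Hg v [Hv _].
  assert (chain : forall j, (0 < j <= k)%nat -> forall eps, 0 < eps ->
     exists U, ub f 0 (p j) U /\ U <= H (p j) - H 0 + eps).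
  { induction j; intros Hj eps Heps. lia.
    pose proof Hp as (P0 & P1 & Ps).
    assert (R1 := part_range k p Hp j ltac:(lia)).
    assert (R2 := part_range k p Hp (S j) ltac:(lia)).
    destruct (Hg j ltac:(lia)) as (g & Hgc & Hgd).
    destruct (piece f H g (p j) (p (S j)) (eps/2) ltac:(lra) (Ps j ltac:(lia)) ltac:(lra) HC Hgc Hgd ltac:(lra))
      as (U2 & HU2 & HU2').
    destruct j.
    - rewrite P0 in *. exists U2; split; auto. lra.
    - destruct (IHj ltac:(lia) (eps/2) ltac:(lra)) as (U1 & HU1 & HU1').
      exists (U1 + U2). split. eapply ub_trans; eauto. lra. }
  apply Rle_plus_epsilon. intros eps Heps.
  pose proof Hp as (P0 & P1 & Ps).
  destruct k. { rewrite P0 in P1. lra. }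
  destruct (chain (S k) ltac:(lia) eps Heps) as (U & HU & HU').
  rewrite P1 in *. pose proof (Hv U (ub_upper f U HU)). lra.
Qed.

Lemma cpt_elim F x : continuity_pt F x -> forall eps, 0 < eps ->
  exists del, 0 < del /\ forall y, Rabs (y - x) < del -> Rabs (F y - F x) < eps.
Proof.
  intros HF eps He. destruct (HF eps He) as (d & Hd & Hy).
  exists d. split. lra. intros y Hyx.
  destruct (Req_dec x y) as [<-|Hne].
  - unfold Rminus. rewrite Rplus_opp_r, Rabs_R0. lra.
  - apply (Hy y). split. split. constructor. auto. simpl. unfold R_dist. auto.
Qed.

Lemma cpt_intro F x : (forall eps, 0 < eps ->
  exists del, 0 < del /\ forall y, Rabs (y - x) < del -> Rabs (F y - F x) < eps) -> continuity_pt F x.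
Proof.
  intros HF eps He. destruct (HF eps He) as (d & Hd & Hy).
  exists d. split. lra. intros y [_ Hyx]. simpl in *. unfold R_dist in *. auto.
Qed.

Lemma cont_on01_plus f g : cont_on01 f -> cont_on01 g -> cont_on01 (fun s => f s + g s).
Proof.
  intros Hf Hg s Hs eps He.
  destruct (Hf s Hs (eps/2) ltac:(lra)) as (d1 & Hd1 & H1).
  destruct (Hg s Hs (eps/2) ltac:(lra)) as (d2 & Hd2 & H2).
  exists (Rmin d1 d2). split. apply Rmin_pos; lra. intros t Ht Hts.
  pose proof (Rmin_l d1 d2). pose proof (Rmin_r d1 d2).
  pose proof (H1 t Ht ltac:(lra)). pose proof (H2 t Ht ltac:(lra)).
  replace (f t + g t - (f s + g s)) with ((f t - f s) + (g t - g s)) by ring.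
  pose proof (Rabs_triang (f t - f s) (g t - g s)). lra.
Qed.

Lemma cont_on01_comp F f : continuity F -> cont_on01 f -> cont_on01 (fun s => F (f s)).
Proof.
  intros HF Hf s Hs eps He.
  destruct (cpt_elim F (f s) (HF (f s)) eps He) as (d1 & Hd1 & H1).
  destruct (Hf s Hs d1 Hd1) as (d2 & Hd2 & H2).
  exists d2. split; auto.
Qed.

Lemma cont_on01_of F : continuity F -> cont_on01 F.
Proof.
  intros HF s Hs eps He.
  destruct (cpt_elim F s (HF s) eps He) as (d1 & Hd1 & H1).
  exists d1. split; auto.
Qed.

Lemma dl_ext f g x l l' : (forall y, f y = g y) -> l = l' -> derivable_pt_lim f x l -> derivable_pt_lim g x l'.
Proof.
  intros E <- H. replace g with f; auto. apply functional_extensionality; auto.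
Qed.

Lemma dl_cont f x l : derivable_pt_lim f x l -> continuity_pt f x.
Proof.
  intros H. apply (derivable_continuous_pt f x (exist _ l H)).
Qed.

Lemma dl_lin a b0 x : derivable_pt_lim (fun x => a * x + b0) x a.
Proof.
  apply (dl_ext ((mult_real_fct a id) + fct_cte b0)%F _ _ (a * 1 + 0)).
  intros y. unfold mult_real_fct, id, fct_cte, plus_fct. ring. ring.
  apply derivable_pt_lim_plus. apply derivable_pt_lim_scal. apply derivable_pt_lim_id.
  apply derivable_pt_lim_const.
Qed.

Lemma continuity_lin a b0 : continuity (fun x => a * x + b0).
Proof.
  intros x. eapply dl_cont. apply dl_lin.
Qed.

Definition clamp01 (x : R) : R := Rmax 0 (Rmin 1 x).

Lemma clamp01_in x : 0 <= x <= 1 -> clamp01 x = x.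
Proof.
  intros H. unfold clamp01. rewrite Rmin_right by lra. rewrite Rmax_right; lra.
Qed.

Lemma clamp01_range x : 0 <= clamp01 x <= 1.
Proof.
  unfold clamp01. unfold Rmax, Rmin. repeat destruct Rle_dec; lra.
Qed.

Lemma clamp01_lip x y : Rabs (clamp01 x - clamp01 y) <= Rabs (x - y).
Proof.
  unfold clamp01, Rmax, Rmin. repeat destruct Rle_dec;
  unfold Rabs; repeat destruct Rcase_abs; lra.
Qed.

Lemma clamp_cont u : cont_on01 u -> continuity (fun x => u (clamp01 x)).
Proof.
  intros Hu x. apply cpt_intro. intros eps He.
  destruct (Hu (clamp01 x) (clamp01_range x) eps He) as (d & Hd & H).
  exists d. split; auto. intros y Hy. apply H. apply clamp01_range.
  pose proof (clamp01_lip y x). lra.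
Qed.

Lemma incr_bound2 (H h : R -> R) (a b M : R) : 0 <= a -> a < b -> b <= 1 -> cont_on01 H ->
  (forall s, a < s < b -> derivable_pt_lim H s (h s)) ->
  (forall s, a < s < b -> h s <= M) -> H b - H a <= M * (b - a).
Proof.
  intros Ha Hab Hb HC HD HM.
  assert (Q := incr_bound (fun x => - H x) (fun x => - h x) a b (-M) Ha Hab Hb).
  assert (- M * (b - a) <= - H b - - H a); [|lra].
  apply Q.
  - apply (cont_on01_comp (fun x => - x)); auto.
    replace (fun x => - x) with (fun x => (-1) * x + 0) by (apply functional_extensionality; intro; ring).
    apply continuity_lin.
  - intros s Hs. apply (derivable_pt_lim_opp H). auto.
  - intros s Hs. pose proof (HM s Hs). lra.
Qed.

Lemma LB f H h : cont_on01 H ->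
  (forall s, 0 < s < 1 -> derivable_pt_lim H s (h s) /\ h s <= f s) ->
  forall v, upper_integral01 f v -> H 1 - H 0 <= v.
Proof.
  intros HC Hd v [_ Hv]. apply Hv. intros U (k & p & M & Hp & Hb & ->).
  pose proof Hp as (P0 & P1 & Ps).
  assert (forall j, (j <= k)%nat -> H (p j) - H (p 0%nat) <= rsum j (fun i => (p (S i) - p i) * M i)).
  { induction j; intros Hj. simpl. lra. simpl.
    pose proof (IHj ltac:(lia)).
    assert (R1 := part_range k p Hp j ltac:(lia)).
    assert (R2 := part_range k p Hp (S j) ltac:(lia)).
    assert (H (p (S j)) - H (p j) <= M j * (p (S j) - p j)).
    { pose proof (Ps j ltac:(lia)). apply incr_bound2 with h; try lra; auto.
      intros s Hs. apply Hd. lra.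
      intros s Hs. destruct (Hd s ltac:(lra)) as [_ Q]. pose proof (Hb j ltac:(lia) s ltac:(lra)). lra. }
    lra. }
  pose proof (H0 k ltac:(lia)). rewrite P0, P1 in *. auto.
Qed.

Lemma mono g d k p : is_partition01 k p -> cont_on01 g ->
  (forall i, (i<k)%nat -> forall s, p i < s < p (S i) -> derivable_pt_lim g s (d s) /\ 0 <= d s) ->
  forall s, 0 <= s <= 1 -> g 0 <= g s <= g 1.
Proof.
  intros Hp HC Hd.
  pose proof Hp as (P0 & P1 & Ps).
  assert (forall j, (j <= k)%nat -> forall s, 0 <= s <= p j -> g 0 <= g s /\ g s <= g (p j)).
  { induction j; intros Hj s Hs.
    - rewrite P0 in Hs. assert (s = 0) by lra. subst. rewrite P0. lra.
    - assert (R1 := part_range k p Hp j ltac:(lia)).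
      assert (R2 := part_range k p Hp (S j) ltac:(lia)).
      assert (Hs1 := Ps j ltac:(lia)).
      assert (Q : forall a b, p j <= a -> a < b -> b <= p (S j) -> g a <= g b).
      { intros a b Ha Hab Hb. assert (0 * (b - a) <= g b - g a); [|lra].
        apply incr_bound with d; try lra; auto.
        intros t Ht; apply (Hd j ltac:(lia)); lra.
        intros t Ht; apply (Hd j ltac:(lia)); lra. }
      destruct (IHj ltac:(lia) (p j) ltac:(lra)) as [A1 A2].
      destruct (Rle_dec s (p j)).
      + destruct (IHj ltac:(lia) s ltac:(lra)). pose proof (Q (p j) (p (S j)) ltac:(lra) Hs1 ltac:(lra)). lra.
      + pose proof (Q (p j) s ltac:(lra) ltac:(lra) ltac:(lra)).
        destruct (Req_dec s (p (S j))) as [->|Hne]. lra.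
        pose proof (Q s (p (S j)) ltac:(lra) ltac:(lra) ltac:(lra)). lra. }
  intros s Hs. rewrite <- P1. apply H; auto. rewrite P1; auto.
Qed.

Section Step.
Variables (b r : nat -> R).

Lemma bp_count_le k x : (bp_count k b x <= k)%nat.
Proof. induction k; simpl; auto. destruct Rlt_dec; lia. Qed.

Lemma bp_index_lt k x j : bp_index k b x = Some j -> (j < k)%nat.
Proof.
  induction k; simpl. discriminate. destruct Req_EM_T. intros [=]; lia.
  intros H; specialize (IHk H); lia.
Qed.

Lemma bp_count_all k x : (forall j, (j < k)%nat -> b j < x) -> bp_count k b x = k.
Proof.
  induction k; intros H; simpl; auto. rewrite IHk by (intros; apply H; lia).
  destruct Rlt_dec. lia. exfalso. apply n. apply H. lia.
Qed.

Lemma bp_index_none k x : (forall j, (j < k)%nat -> x <> b j) -> bp_index k b x = None.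
Proof.
  induction k; intros H; simpl; auto. destruct Req_EM_T. exfalso; apply (H k); auto.
  apply IHk. intros; apply H; lia.
Qed.

Lemma bp_order n : (forall j, (S j < n)%nat -> b j < b (S j)) ->
  forall i j, (i < j)%nat -> (j < n)%nat -> b i < b j.
Proof.
  intros H i j Hij Hj. induction j. lia.
  destruct (Nat.eq_dec i j). subst. apply H; lia.
  pose proof (IHj ltac:(lia) ltac:(lia)). pose proof (H j ltac:(lia)). lra.
Qed.

Lemma ss_pos n x : is_step_speed_data n b r -> 0 < step_speed n b r x.
Proof.
  intros [_ Hr]. unfold step_speed. destruct (bp_index n b x) eqn:E.
  - apply bp_index_lt in E. apply Rmin_glb_lt; apply Hr; lia.
  - apply Hr. apply bp_count_le.
Qed.

Definition ppos (x : R) := Rmax 0 x.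
Definition nneg (x : R) := Rmax 0 (- x).
Definition Dl (j : nat) := / r (S j) - / r j.

Lemma ppos_nneg x : ppos x - nneg x = x.
Proof. unfold ppos, nneg, Rmax. repeat destruct Rle_dec; lra. Qed.
Lemma ppos_ge x : 0 <= ppos x.
Proof. apply Rmax_l. Qed.
Lemma nneg_ge x : 0 <= nneg x.
Proof. apply Rmax_l. Qed.

Fixpoint Dfun (k : nat) (x : R) : R :=
  match k with
  | O => / r 0
  | S j => Dfun j x + ppos (Dl j) * (if Rle_dec (b j) x then 1 else 0)
                    - nneg (Dl j) * (if Rlt_dec (b j) x then 1 else 0)
  end.

Lemma ss_top n k x : is_step_speed_data n b r -> (k < n)%nat -> b k <= x ->
  step_speed k b r x = r k.
Proof.
  intros [Hb _] Hk Hx. unfold step_speed.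
  rewrite bp_index_none. rewrite bp_count_all. auto.
  intros j Hj. pose proof (bp_order n Hb j k Hj Hk). lra.
  intros j Hj. pose proof (bp_order n Hb j k Hj Hk). lra.
Qed.

Lemma ss_rep n : is_step_speed_data n b r -> forall k, (k <= n)%nat ->
  forall x, / step_speed k b r x = Dfun k x.
Proof.
  intros Hd. pose proof Hd as [Hb Hr]. induction k; intros Hk x.
  - reflexivity.
  - assert (Hr1 : 0 < r k) by (apply Hr; lia).
    assert (Hr2 : 0 < r (S k)) by (apply Hr; lia).
    cbn [Dfun]. rewrite <- IHk by lia.
    unfold step_speed at 1. cbn [bp_index bp_count].
    destruct (Req_EM_T x (b k)) as [E|E].
    + subst x. rewrite (ss_top n k (b k)) by (auto; lia || lra).
      destruct (Rle_dec (b k) (b k)); [|lra]. destruct (Rlt_dec (b k) (b k)); [lra|].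
      unfold ppos, Dl, Rmin, Rmax. destruct Rle_dec; destruct Rle_dec;
      first [ assert (/ r (S k) <= / r k) by (apply Rinv_le_contravar; lra); lra
            | assert (/ r k < / r (S k)) by (apply Rinv_lt_contravar; nra); lra ].
    + destruct (Rlt_dec (b k) x) as [L|L].
      * rewrite (ss_top n k x) by (auto; lia || lra).
        rewrite bp_index_none. rewrite bp_count_all.
        destruct (Rle_dec (b k) x); [|lra].
        replace (k + 1)%nat with (S k) by lia.
        pose proof (ppos_nneg (Dl k)). unfold Dl in *. lra.
        intros j Hj. pose proof (bp_order n Hb j k Hj ltac:(lia)). lra.
        intros j Hj. pose proof (bp_order n Hb j k Hj ltac:(lia)). lra.
      * destruct (Rle_dec (b k) x). lra.
        replace (bp_count k b x + 0)%nat with (bp_count k b x) by lia.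
        unfold step_speed. ring.
Qed.

Fixpoint Dm (k : nat) : R :=
  match k with O => / r 0 | S j => Dm j + ppos (Dl j) end.

Lemma Dfun_le k x : Dfun k x <= Dm k.
Proof.
  induction k; simpl. lra. pose proof (ppos_ge (Dl k)). pose proof (nneg_ge (Dl k)).
  destruct Rle_dec; destruct Rlt_dec; nra.
Qed.

End Step.

Definition P (x : R) : R :=
  if Rle_dec x 0 then 0 else if Rle_dec x 1 then x * x / 2 else x - 1/2.

Lemma clamp01_val x : clamp01 x = (if Rle_dec x 0 then 0 else if Rle_dec x 1 then x else 1).
Proof. unfold clamp01, Rmax, Rmin. repeat destruct Rle_dec; lra. Qed.

Lemma P_quad x h : Rabs (P (x + h) - P x - h * clamp01 x) <= h * h / 2.
Proof.
  rewrite clamp01_val. unfold P. repeat destruct Rle_dec;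
  unfold Rabs; destruct Rcase_abs; nra.
Qed.

Lemma P_deriv x : derivable_pt_lim P x (clamp01 x).
Proof.
  intros eps He. exists (mkposreal eps He). intros h Hh Hhe. simpl in Hhe.
  pose proof (P_quad x h).
  assert (Hpos : 0 < Rabs h) by (apply Rabs_pos_lt; auto).
  replace ((P (x + h) - P x) / h - clamp01 x) with ((P (x + h) - P x - h * clamp01 x) / h)
    by (field; auto).
  unfold Rdiv. rewrite Rabs_mult, Rabs_inv.
  apply Rle_lt_trans with (h * h / 2 * / Rabs h).
  apply Rmult_le_compat_r. left; apply Rinv_0_lt_compat; auto. auto.
  replace (h * h) with (Rabs h * Rabs h) by (rewrite <- Rabs_mult; apply Rabs_right; nra).
  replace (Rabs h * Rabs h / 2 * / Rabs h) with (Rabs h / 2) by (field; lra). lra.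
Qed.

Lemma P_inc x t : 0 <= t -> 0 <= P (x + t) - P x <= t.
Proof. intros Ht. unfold P. repeat destruct Rle_dec; nra. Qed.

Lemma clamp01_cont : continuity clamp01.
Proof.
  intros x. apply cpt_intro. intros eps He. exists eps. split; auto.
  intros y Hy. pose proof (clamp01_lip y x). lra.
Qed.

Lemma clamp01_one x : 1 <= x -> clamp01 x = 1.
Proof. intros. rewrite clamp01_val. repeat destruct Rle_dec; lra. Qed.
Lemma clamp01_zero x : x <= 0 -> clamp01 x = 0.
Proof. intros. rewrite clamp01_val. repeat destruct Rle_dec; lra. Qed.

Lemma cont_comb f g h p q : continuity f -> continuity g -> continuity h ->
  continuity (fun x => f x + p * g x - q * h x).
Proof.
  intros Hf Hg Hh.
  exact (continuity_minus _ _ (continuity_plus _ _ Hf (continuity_scal _ p Hg)) (continuity_scal _ q Hh)).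
Qed.

Lemma dl_comb f g h p q x a b0 c : derivable_pt_lim f x a -> derivable_pt_lim g x b0 ->
  derivable_pt_lim h x c -> derivable_pt_lim (fun x => f x + p * g x - q * h x) x (a + p * b0 - q * c).
Proof.
  intros Hf Hg Hh.
  exact (derivable_pt_lim_minus _ _ _ _ _ (derivable_pt_lim_plus _ _ _ _ _ Hf (derivable_pt_lim_scal _ p _ _ Hg)) (derivable_pt_lim_scal _ q _ _ Hh)).
Qed.

Section Ramps.
Variables (b r : nat -> R) (dd : R).
Hypothesis Hdd : 0 < dd.

Lemma ramp_cont c : continuity (fun v => clamp01 ((v - c) / dd)).
Proof.
  assert (E : (fun v => clamp01 ((v - c) / dd)) = comp clamp01 (fun v => (/dd) * v + (- c / dd))).
  { apply functional_extensionality; intro v. unfold comp. f_equal. field. lra. }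
  rewrite E. apply continuity_comp. apply continuity_lin. apply clamp01_cont.
Qed.

Lemma ramp_deriv c v : derivable_pt_lim (fun v => dd * P ((v - c) / dd)) v (clamp01 ((v - c) / dd)).
Proof.
  apply (dl_ext (mult_real_fct dd (comp P (fun v => (/dd) * v + (- c / dd)))) _ _
    (dd * (clamp01 ((/dd) * v + (- c / dd)) * (/dd)))).
  - intros y. unfold mult_real_fct, comp. f_equal. f_equal. field. lra.
  - replace ((/dd) * v + (- c / dd)) with ((v - c)/dd) by (field; lra). field. lra.
  - apply derivable_pt_lim_scal. apply derivable_pt_lim_comp. apply dl_lin. apply P_deriv.
Qed.

Fixpoint psi (k : nat) (v : R) : R :=
  match k with
  | O => / r 0
  | S j => psi j v + ppos (Dl r j) * clamp01 ((v - (b j - dd)) / dd)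
                   - nneg (Dl r j) * clamp01 ((v - (b j + dd)) / dd)
  end.
Fixpoint Psi (k : nat) (v : R) : R :=
  match k with
  | O => / r 0 * v
  | S j => Psi j v + ppos (Dl r j) * (dd * P ((v - (b j - dd)) / dd))
                   - nneg (Dl r j) * (dd * P ((v - (b j + dd)) / dd))
  end.
Fixpoint phi (k : nat) (v : R) : R :=
  match k with
  | O => / r 0
  | S j => phi j v + ppos (Dl r j) * clamp01 ((v - b j) / dd)
                   - nneg (Dl r j) * clamp01 ((v - (b j - dd)) / dd)
  end.
Fixpoint Phi (k : nat) (v : R) : R :=
  match k with
  | O => / r 0 * v
  | S j => Phi j v + ppos (Dl r j) * (dd * P ((v - b j) / dd))
                   - nneg (Dl r j) * (dd * P ((v - (b j - dd)) / dd))
  end.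

Lemma psi_cont k : continuity (psi k).
Proof.
  induction k; simpl. apply continuity_const. intros x y; auto.
  apply cont_comb; auto; apply ramp_cont.
Qed.

Lemma phi_cont k : continuity (phi k).
Proof.
  induction k; simpl. apply continuity_const. intros x y; auto.
  apply cont_comb; auto; apply ramp_cont.
Qed.

Lemma Psi_deriv k v : derivable_pt_lim (Psi k) v (psi k v).
Proof.
  induction k; simpl.
  - apply (dl_ext (fun x => / r 0 * x + 0) _ _ (/ r 0)). intros; ring. ring. apply dl_lin.
  - apply dl_comb; auto; apply ramp_deriv.
Qed.

Lemma Phi_deriv k v : derivable_pt_lim (Phi k) v (phi k v).
Proof.
  induction k; simpl.
  - apply (dl_ext (fun x => / r 0 * x + 0) _ _ (/ r 0)). intros; ring. ring. apply dl_lin.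
  - apply dl_comb; auto; apply ramp_deriv.
Qed.

Lemma psi_maj k v t : 0 <= t <= dd -> Dfun b r k (v - t) <= psi k v.
Proof.
  intros Ht. induction k; simpl. lra.
  pose proof (ppos_ge (Dl r k)). pose proof (nneg_ge (Dl r k)).
  pose proof (clamp01_range ((v - (b k - dd)) / dd)).
  pose proof (clamp01_range ((v - (b k + dd)) / dd)).
  assert (A1 : (if Rle_dec (b k) (v - t) then 1 else 0) <= clamp01 ((v - (b k - dd)) / dd)).
  { destruct Rle_dec. rewrite clamp01_one. lra.
    apply Rmult_le_reg_r with dd; auto. unfold Rdiv. rewrite Rmult_assoc, Rinv_l by lra. lra.
    lra. }
  assert (A2 : clamp01 ((v - (b k + dd)) / dd) <= (if Rlt_dec (b k) (v - t) then 1 else 0)).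
  { destruct Rlt_dec. lra. rewrite clamp01_zero. lra.
    apply Rmult_le_reg_r with dd; auto. unfold Rdiv. rewrite Rmult_assoc, Rinv_l by lra. lra. }
  assert (ppos (Dl r k) * (if Rle_dec (b k) (v - t) then 1 else 0) <= ppos (Dl r k) * clamp01 ((v - (b k - dd)) / dd))
    by (apply Rmult_le_compat_l; auto).
  assert (nneg (Dl r k) * clamp01 ((v - (b k + dd)) / dd) <= nneg (Dl r k) * (if Rlt_dec (b k) (v - t) then 1 else 0))
    by (apply Rmult_le_compat_l; auto).
  lra.
Qed.

Lemma phi_min k v : phi k v <= Dfun b r k v.
Proof.
  induction k; simpl. lra.
  pose proof (ppos_ge (Dl r k)). pose proof (nneg_ge (Dl r k)).
  pose proof (clamp01_range ((v - b k) / dd)).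
  pose proof (clamp01_range ((v - (b k - dd)) / dd)).
  assert (A1 : clamp01 ((v - b k) / dd) <= (if Rle_dec (b k) v then 1 else 0)).
  { destruct Rle_dec. lra. rewrite clamp01_zero. lra.
    apply Rmult_le_reg_r with dd; auto. unfold Rdiv. rewrite Rmult_assoc, Rinv_l by lra. lra. }
  assert (A2 : (if Rlt_dec (b k) v then 1 else 0) <= clamp01 ((v - (b k - dd)) / dd)).
  { destruct Rlt_dec. rewrite clamp01_one. lra.
    apply Rmult_le_reg_r with dd; auto. unfold Rdiv. rewrite Rmult_assoc, Rinv_l by lra. lra.
    lra. }
  assert (ppos (Dl r k) * clamp01 ((v - b k) / dd) <= ppos (Dl r k) * (if Rle_dec (b k) v then 1 else 0))
    by (apply Rmult_le_compat_l; auto).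
  assert (nneg (Dl r k) * (if Rlt_dec (b k) v then 1 else 0) <= nneg (Dl r k) * clamp01 ((v - (b k - dd)) / dd))
    by (apply Rmult_le_compat_l; auto).
  lra.
Qed.

Fixpoint Kc (k : nat) : R :=
  match k with O => / r 0 | S j => Kc j + 2 * ppos (Dl r j) + nneg (Dl r j) end.

Lemma Psi_Phi k Z A : Psi k (Z + dd) - Psi k A - (Phi k Z - Phi k A) <= dd * Kc k.
Proof.
  induction k; simpl. nra.
  set (Y := (Z - b k) / dd). set (X := (A - b k) / dd).
  replace ((Z + dd - (b k - dd)) / dd) with (Y + 2) by (unfold Y; field; lra).
  replace ((A - (b k - dd)) / dd) with (X + 1) by (unfold X; field; lra).
  replace ((Z + dd - (b k + dd)) / dd) with Y by (unfold Y; field; lra).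
  replace ((A - (b k + dd)) / dd) with (X - 1) by (unfold X; field; lra).
  replace ((Z - (b k - dd)) / dd) with (Y + 1) by (unfold Y; field; lra).
  fold X. fold Y.
  pose proof (ppos_ge (Dl r k)). pose proof (nneg_ge (Dl r k)).
  pose proof (P_inc Y 2 ltac:(lra)). pose proof (P_inc X 1 ltac:(lra)).
  pose proof (P_inc Y 1 ltac:(lra)). pose proof (P_inc (X - 1) 2 ltac:(lra)).
  replace (X - 1 + 2) with (X + 1) in * by ring.
  assert (ppos (Dl r k) * (dd * ((P (Y + 2) - P Y) - (P (X + 1) - P X))) <= ppos (Dl r k) * (dd * 2)).
  { apply Rmult_le_compat_l; auto. apply Rmult_le_compat_l; lra. }
  assert (nneg (Dl r k) * (dd * ((P (Y + 1) - P Y) - (P (X + 1) - P (X - 1)))) <= nneg (Dl r k) * (dd * 1)).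
  { apply Rmult_le_compat_l; auto. apply Rmult_le_compat_l; lra. }
  nra.
Qed.

End Ramps.

Lemma dl_lin2 x1 x2 s l1 l2 a1 a2 k0 : derivable_pt_lim x1 s l1 -> derivable_pt_lim x2 s l2 ->
  derivable_pt_lim (fun s => a1 * x1 s + a2 * x2 s + k0) s (a1 * l1 + a2 * l2).
Proof.
  intros H1 H2.
  apply (dl_ext (plus_fct (plus_fct (mult_real_fct a1 x1) (mult_real_fct a2 x2)) (fct_cte k0)) _ _
     (a1 * l1 + a2 * l2 + 0)). intros; reflexivity. ring.
  apply derivable_pt_lim_plus. apply derivable_pt_lim_plus; apply derivable_pt_lim_scal; auto.
  apply derivable_pt_lim_const.
Qed.

Lemma cont_lin2 e1 e2 a1 a2 k0 : continuity e1 -> continuity e2 ->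
  continuity (fun s => a1 * e1 s + a2 * e2 s + k0).
Proof.
  intros H1 H2.
  exact (continuity_plus _ _ (continuity_plus _ _ (continuity_scal _ a1 H1) (continuity_scal _ a2 H2))
     (continuity_const (fct_cte k0) (fun x y => eq_refl))).
Qed.

Lemma cont_on01_scal x1 a : cont_on01 x1 -> cont_on01 (fun s => a * x1 s).
Proof.
  intros H1. pose proof (cont_on01_comp (fun y => a * y + 0) x1 (continuity_lin a 0) H1) as H.
  intros s Hs eps He; destruct (H s Hs eps He) as (d & Hd & Q); exists d; split; auto;
  intros t Ht Hts; specialize (Q t Ht Hts); rewrite !Rplus_0_r in Q; auto.
Qed.

Lemma cont_on01_lin2 x1 x2 a1 a2 k0 : cont_on01 x1 -> cont_on01 x2 ->
  cont_on01 (fun s => a1 * x1 s + a2 * x2 s + k0).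
Proof.
  intros H1 H2.
  apply (cont_on01_plus (fun s => a1 * x1 s + a2 * x2 s) (fun _ => k0)).
  apply cont_on01_plus; apply cont_on01_scal; auto.
  intros s Hs eps He. exists 1. split. lra. intros. unfold Rminus. rewrite Rplus_opp_r, Rabs_R0. lra.
Qed.

Lemma GEN (F Fd : R -> R) (HF : forall v, derivable_pt_lim F v (Fd v)) (HFd : continuity Fd)
  f x1 x2 d1 d2 sg a1 a2 k0 be1 be2 :
  admissible_path x1 x2 d1 d2 ->
  (forall s, 0 < s < 1 -> inW (d1 s) (d2 s) ->
     f s <= sg * Fd (a1 * x1 s + a2 * x2 s + k0) * (a1 * d1 s + a2 * d2 s) + be1 * d1 s + be2 * d2 s) ->
  forall v, upper_integral01 f v ->
  v <= (sg * F (a1 * x1 1 + a2 * x2 1 + k0) + be1 * x1 1 + be2 * x2 1)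
     - (sg * F (a1 * x1 0 + a2 * x2 0 + k0) + be1 * x1 0 + be2 * x2 0).
Proof.
  intros (C1 & C2 & k & p & Hp & Hpc) Hf v Hv.
  assert (HFc : continuity F) by (intros x; eapply dl_cont; apply HF).
  set (w := fun s => a1 * x1 s + a2 * x2 s + k0).
  set (H := fun s => sg * F (w s) + (be1 * x1 s + be2 * x2 s + 0)).
  assert (Hfin : v <= H 1 - H 0).
  2: { unfold H, w in Hfin. lra. }
  apply (UB f H k p Hp).
  - apply cont_on01_plus. apply cont_on01_scal. apply (cont_on01_comp F w HFc).
    apply cont_on01_lin2; auto. apply cont_on01_lin2; auto.
  - intros i Hi. destruct (Hpc i Hi) as (Hd & e1 & e2 & Ce1 & Ce2 & Ee).
    set (wc := fun s => a1 * x1 (clamp01 s) + a2 * x2 (clamp01 s) + k0).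
    assert (Cwc : continuity wc) by (apply cont_lin2; apply clamp_cont; auto).
    exists (fun s => sg * (Fd (wc s) * (a1 * e1 s + a2 * e2 s + 0)) + (be1 * e1 s + be2 * e2 s + 0)).
    split.
    + exact (continuity_plus _ _ (continuity_scal _ sg (continuity_mult _ _
          (continuity_comp wc Fd Cwc HFd) (cont_lin2 e1 e2 a1 a2 0 Ce1 Ce2))) (cont_lin2 e1 e2 be1 be2 0 Ce1 Ce2)).
    + intros s Hs. pose proof Hp as (P0 & P1 & Ps).
      assert (R1 := part_range k p Hp i ltac:(lia)).
      assert (R2 := part_range k p Hp (S i) ltac:(lia)).
      destruct (Hd s Hs) as (D1 & D2 & HW). destruct (Ee s Hs) as [E1 E2].
      assert (Wc : wc s = w s) by (unfold wc, w; rewrite clamp01_in by lra; reflexivity).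
      rewrite Wc, E1, E2. split.
      * apply (dl_ext (plus_fct (mult_real_fct sg (comp F w)) (fun s => be1 * x1 s + be2 * x2 s + 0)) _ _
           (sg * (Fd (w s) * (a1 * d1 s + a2 * d2 s)) + (be1 * d1 s + be2 * d2 s))).
        intros y; reflexivity. ring.
        apply derivable_pt_lim_plus. apply derivable_pt_lim_scal.
        replace (Fd (w s) * (a1 * d1 s + a2 * d2 s)) with (Fd (w s) * (a1 * d1 s + a2 * d2 s)) by ring.
        apply derivable_pt_lim_comp. apply dl_lin2; auto. apply HF.
        apply dl_lin2; auto.
      * pose proof (Hf s ltac:(lra) HW). unfold w. lra.
  - exact Hv.
Qed.

Definition p01 (i : nat) : R := match i with O => 0 | _ => 1 end.

Lemma p01_part : is_partition01 1 p01.
Proof. repeat split; simpl; auto. intros i Hi. assert (i = 0%nat) by lia. subst. simpl. lra. Qed.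

Lemma straight_adm P1 P2 Q1 Q2 : inW (Q1 - P1) (Q2 - P2) ->
  admissible_path (fun s => (Q1 - P1) * s + P1) (fun s => (Q2 - P2) * s + P2)
                  (fun _ => Q1 - P1) (fun _ => Q2 - P2).
Proof.
  intros HW. split; [|split].
  apply cont_on01_of, continuity_lin. apply cont_on01_of, continuity_lin.
  exists 1%nat, p01. split. apply p01_part.
  intros i Hi. split.
  - intros s Hs. split; [apply dl_lin|split; [apply dl_lin|auto]].
  - exists (fun _ => Q1 - P1), (fun _ => Q2 - P2). split; [|split].
    apply continuity_const; intros x y; auto. apply continuity_const; intros x y; auto.
    auto.
Qed.

Lemma rsum_nonneg k g : (forall i, (i < k)%nat -> 0 <= g i) -> 0 <= rsum k g.
Proof.
  induction k; intros H; simpl. lra. pose proof (H k ltac:(lia)). pose proof (IHk ltac:(intros; apply H; lia)). lra.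
Qed.

Lemma value_exists f B : (forall s, 0 <= f s) -> (forall s, 0 <= s <= 1 -> f s <= B) ->
  exists v, upper_integral01 f v.
Proof.
  intros Hf HB.
  set (E := fun y => upper_sums f (- y)).
  assert (Hbd : bound E).
  { exists 0. intros y (k & p & M & Hp & Hb & HU).
    assert (0 <= - y); [|lra]. rewrite HU. apply rsum_nonneg. intros i Hi.
    pose proof Hp as (_ & _ & Ps). pose proof (Ps i Hi).
    pose proof (Hb i Hi (p i) ltac:(lra)). pose proof (Hf (p i)). nra. }
  assert (Hne : exists y, E y).
  { exists (- ((p01 1 - p01 0) * B)). unfold E. rewrite Ropp_involutive.
    exists 1%nat, p01, (fun _ => B). split. apply p01_part. split.
    intros i Hi s Hs. assert (i = 0%nat) by lia. subst. simpl in Hs. apply HB. lra.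
    simpl. ring. }
  destruct (completeness E Hbd Hne) as (m & Hm1 & Hm2).
  exists (- m). split.
  - intros U HU. assert (- U <= m); [|lra]. apply Hm1. unfold E. rewrite Ropp_involutive. auto.
  - intros l Hl. assert (m <= - l); [|lra]. apply Hm2. intros y Hy. pose proof (Hl _ Hy). lra.
Qed.

Lemma gamma_bnd t y e : 0 <= t -> 0 <= y -> 0 < e ->
  (sqrt t + sqrt y) ^ 2 <= (1 + e) * t + (1 + / e) * y.
Proof.
  intros Ht Hy He.
  pose proof (sqrt_sqrt t Ht). pose proof (sqrt_sqrt y Hy).
  pose proof (sqrt_pos t). pose proof (sqrt_pos y).
  set (A := sqrt t) in *. set (B := sqrt y) in *.
  assert (2 * A * B <= e * (A * A) + / e * (B * B)).
  { assert (0 <= / e * (e * A - B) ^ 2).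
    apply Rmult_le_pos. left; apply Rinv_0_lt_compat; auto. apply pow2_ge_0.
    replace (/ e * (e * A - B) ^ 2) with (e * (A * A) - 2 * A * B + / e * (B * B)) in H3 by (field; lra).
    lra. }
  rewrite <- H, <- H0. nra.
Qed.

Lemma gamma_nonneg x y : 0 <= gamma x y.
Proof. unfold gamma. apply pow2_ge_0. Qed.

Section Main.
Variables (n : nat) (b r : nat -> R) (q : R).
Hypothesis Hdat : is_step_speed_data n b r.

Let c := step_speed n b r.
Let Dmx := Dm r n.

Lemma Dpos x : 0 < / c x.
Proof. apply Rinv_0_lt_compat. apply ss_pos; auto. Qed.

Lemma Drep x : / c x = Dfun b r n x.
Proof. apply (ss_rep b r n Hdat n (le_n n)). Qed.

Lemma Dle x : / c x <= Dmx.
Proof. rewrite Drep. apply Dfun_le. Qed.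

Lemma crude P Q v : path_value c q P Q v -> v <= Dmx * (2 * (fst Q - fst P) + 4 * (snd Q - snd P)).
Proof.
  intros (x1 & x2 & d1 & d2 & Ha & E1 & E2 & E3 & E4 & Hv).
  assert (HF : forall v, derivable_pt_lim (fun _ => 0) v ((fun _ => 0) v)).
  { intros y. apply (dl_ext (fun x => 0 * x + 0) _ _ 0). intros; ring. ring. apply dl_lin. }
  pose proof (GEN (fun _ => 0) (fun _ => 0) HF (continuity_const (fun _ => 0) (fun x y => eq_refl))
     (fun s => gamma (d1 s) (d2 s) / c (x1 s - q)) x1 x2 d1 d2 0 0 0 0 (2 * Dmx) (4 * Dmx) Ha) as G.
  assert (Hb : v <= (0 * 0 + 2 * Dmx * x1 1 + 4 * Dmx * x2 1) - (0 * 0 + 2 * Dmx * x1 0 + 4 * Dmx * x2 0)).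
  { apply G; auto. intros s Hs [W1 W2]. unfold gamma, Rdiv.
    pose proof (gamma_bnd (d1 s + d2 s) (d2 s) 1 ltac:(lra) W1 ltac:(lra)).
    rewrite Rinv_1 in H.
    pose proof (Dpos (x1 s - q)). pose proof (Dle (x1 s - q)).
    pose proof (pow2_ge_0 (sqrt (d1 s + d2 s) + sqrt (d2 s))).
    assert ((sqrt (d1 s + d2 s) + sqrt (d2 s)) ^ 2 * / c (x1 s - q) <= (2 * (d1 s + d2 s) + 2 * d2 s) * / c (x1 s - q))
      by (apply Rmult_le_compat_r; lra).
    assert ((2 * (d1 s + d2 s) + 2 * d2 s) * / c (x1 s - q) <= (2 * (d1 s + d2 s) + 2 * d2 s) * Dmx)
      by (apply Rmult_le_compat_l; lra).
    lra. }
  rewrite E1, E2, E3, E4 in Hb. lra.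
Qed.

Lemma Gexists P1 P2 Q1 Q2 : inW (Q1 - P1) (Q2 - P2) ->
  exists G v0, is_Gamma c q (P1, P2) (Q1, Q2) G /\
    upper_integral01 (fun s => gamma (Q1 - P1) (Q2 - P2) / c ((Q1 - P1) * s + P1 - q)) v0 /\ v0 <= G.
Proof.
  intros HW.
  assert (A1 : forall s, 0 <= gamma (Q1 - P1) (Q2 - P2) / c ((Q1 - P1) * s + P1 - q)).
  { intros s. unfold Rdiv. apply Rmult_le_pos. apply gamma_nonneg. left; apply Dpos. }
  assert (A2 : forall s, 0 <= s <= 1 -> gamma (Q1 - P1) (Q2 - P2) / c ((Q1 - P1) * s + P1 - q) <= gamma (Q1 - P1) (Q2 - P2) * Dmx).
  { intros s _. unfold Rdiv. apply Rmult_le_compat_l. apply gamma_nonneg. apply Dle. }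
  destruct (value_exists _ _ A1 A2) as (v0 & Hv0).
  assert (Hpv : path_value c q (P1, P2) (Q1, Q2) v0).
  { exists (fun s => (Q1 - P1) * s + P1), (fun s => (Q2 - P2) * s + P2), (fun _ => Q1 - P1), (fun _ => Q2 - P2).
    split. apply straight_adm; auto. simpl. split; [ring|]. split; [ring|]. split; [ring|]. split; [ring|]. exact Hv0. }
  destruct (completeness (path_value c q (P1, P2) (Q1, Q2))) as (G & HG).
  { exists (Dmx * (2 * (Q1 - P1) + 4 * (Q2 - P2))). intros y Hy. apply crude in Hy. simpl in Hy. auto. }
  { exists v0; auto. }
  exists G, v0. split; auto. split; auto. apply HG. auto.
Qed.

Lemma straightLB dd (Hdd : 0 < dd) sg m1 c1 f v : 0 <= sg * m1 ->
  (forall s, (sg * m1) * / c (m1 * s + c1 - q) <= f s) -> upper_integral01 f v ->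
  sg * Phi b r dd n (m1 * 1 + c1 - q) - sg * Phi b r dd n (m1 * 0 + c1 - q) <= v.
Proof.
  intros Hsm Hf Hv.
  assert (Hd : forall s, derivable_pt_lim (fun s => sg * Phi b r dd n (m1 * s + c1 - q)) s
                   (sg * (phi b r dd n (m1 * s + c1 - q) * m1))).
  { intros s. apply (dl_ext (mult_real_fct sg (comp (Phi b r dd n) (fun s => m1 * s + (c1 - q)))) _ _ (sg * (phi b r dd n (m1 * s + (c1 - q)) * m1))).
    intros y. unfold mult_real_fct, comp. f_equal. f_equal. ring.
    f_equal. f_equal. f_equal. ring.
    apply derivable_pt_lim_scal. apply derivable_pt_lim_comp. apply dl_lin. apply Phi_deriv; auto. }
  apply (LB f (fun s => sg * Phi b r dd n (m1 * s + c1 - q)) (fun s => sg * (phi b r dd n (m1 * s + c1 - q) * m1))).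
  - apply cont_on01_of. intros x. eapply dl_cont. apply Hd.
  - intros s Hs. split. apply Hd.
    pose proof (Hf s). rewrite Drep in H.
    pose proof (phi_min b r dd Hdd n (m1 * s + c1 - q)).
    assert (sg * m1 * phi b r dd n (m1 * s + c1 - q) <= sg * m1 * Dfun b r n (m1 * s + c1 - q))
      by (apply Rmult_le_compat_l; auto). lra.
  - auto.
Qed.

End Main.

Lemma gamma_x0 x : 0 <= x -> gamma x 0 = x.
Proof. intros. unfold gamma. rewrite Rplus_0_r, sqrt_0. simpl. rewrite Rplus_0_r, Rmult_1_r. apply sqrt_sqrt; auto. Qed.

Lemma gamma_neg y : 0 <= y -> gamma (- y) y = y.
Proof. intros. unfold gamma. replace (- y + y) with 0 by ring. rewrite sqrt_0. simpl.
  rewrite Rplus_0_l, Rmult_1_r. apply sqrt_sqrt; auto. Qed.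

Lemma Kc_nonneg r k : 0 < r 0%nat -> 0 <= Kc r k.
Proof.
  intros H. induction k; simpl. left; apply Rinv_0_lt_compat; auto.
  pose proof (ppos_ge (Dl r k)). pose proof (nneg_ge (Dl r k)). lra.
Qed.

Lemma Dm_nonneg r k : 0 < r 0%nat -> 0 <= Dm r k.
Proof.
  intros H. induction k; simpl. left; apply Rinv_0_lt_compat; auto.
  pose proof (ppos_ge (Dl r k)). lra.
Qed.

Lemma sqrt_facts d : 0 < d <= 1 -> 0 < sqrt d /\ sqrt d * sqrt d = d /\ sqrt d <= 1 /\ d <= sqrt d /\ / sqrt d * d = sqrt d.
Proof.
  intros Hd. assert (H1 : 0 < sqrt d) by (apply sqrt_lt_R0; lra).
  assert (H2 : sqrt d * sqrt d = d) by (apply sqrt_sqrt; lra).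
  assert (H3 : sqrt d <= 1) by (rewrite <- sqrt_1; apply sqrt_le_1_alt; lra).
  repeat split; auto. nra. rewrite <- H2 at 2. field. lra.
Qed.

Theorem mainTheorem9 :
  forall (n : nat) (b r : nat -> R) (q z w : R),
    is_step_speed_data n b r -> 0 < z -> 0 < w ->
    let c := step_speed n b r in
    exists C : R,
      (forall delta a : R, 0 < delta <= 1 -> 0 <= a <= z ->
         exists G1 G2 : R,
           is_Gamma c q (a, 0) (z, delta) G1 /\
           is_Gamma c q (a, 0) (z, 0) G2 /\
           G1 - G2 <= C * sqrt delta) /\
      (forall delta b0 : R, 0 < delta <= 1 -> 0 <= b0 <= w ->
         exists G1 G2 : R,
           is_Gamma c q (- b0, b0) (- w, w + delta) G1 /\
           is_Gamma c q (- b0, b0) (- w, w) G2 /\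
           G1 - G2 <= C * sqrt delta).
Proof.
  intros n b r q z w Hdat Hz Hw c.
  assert (Hr0 : 0 < r 0%nat) by (apply (proj2 Hdat); lia).
  set (Dmx := Dm r n). set (K := Kc r n).
  assert (HD0 : 0 <= Dmx) by (apply Dm_nonneg; auto).
  assert (HK0 : 0 <= K) by (apply Kc_nonneg; auto).
  exists (K + Dmx * (z + w + 3)).
  split.
  - intros delta a Hd Ha.
    destruct (sqrt_facts delta Hd) as (Se & Se2 & Se1 & Sde & Sinv).
    set (e := sqrt delta) in *.
    destruct (Gexists n b r q Hdat a 0 z delta) as (G1 & v1 & HG1 & _ & _).
    { split; lra. }
    destruct (Gexists n b r q Hdat a 0 z 0) as (G2 & v2 & HG2 & Hv2 & Hv2G).
    { split; lra. }
    exists G1, G2. split; auto. split; auto.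
    set (be1 := Dmx * e). set (be2 := Dmx * (e + (1 + / e))).
    assert (HB1 : G1 <= (1 * Psi b r delta n (1 * z + 1 * delta + - q) + be1 * z + be2 * delta)
                      - (1 * Psi b r delta n (1 * a + 1 * 0 + - q) + be1 * a + be2 * 0)).
    { apply (proj2 HG1). intros v (x1 & x2 & d1 & d2 & Had & E1 & E2 & E3 & E4 & Hv).
      simpl in E1, E2, E3, E4.
      pose proof Had as (C1 & C2 & k & p & Hp & Hpc).
      assert (Hmono := mono x2 d2 k p Hp C2).
      assert (Hx2 : forall s, 0 <= s <= 1 -> 0 <= x2 s <= delta).
      { intros s Hs. rewrite <- E2, <- E4. apply Hmono; auto.
        intros i Hi s' Hs'. destruct (Hpc i Hi) as (Hd' & _). destruct (Hd' s' Hs') as (_ & D2 & W1 & _). auto. }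
      enough (Hfin : v <= (1 * Psi b r delta n (1 * x1 1 + 1 * x2 1 + - q) + be1 * x1 1 + be2 * x2 1)
                      - (1 * Psi b r delta n (1 * x1 0 + 1 * x2 0 + - q) + be1 * x1 0 + be2 * x2 0)).
      { rewrite E1, E2, E3, E4 in Hfin. exact Hfin. }
      apply (GEN (Psi b r delta n) (psi b r delta n) (Psi_deriv b r delta ltac:(lra) n) (psi_cont b r delta ltac:(lra) n)
               (fun s => gamma (d1 s) (d2 s) / c (x1 s - q)) x1 x2 d1 d2 1 1 1 (- q) be1 be2 Had); auto.
      intros s Hs [W1 W2].
      pose proof (Dpos n b r Hdat (x1 s - q)) as Dp. pose proof (Dle n b r Hdat (x1 s - q)) as Dl'.
      fold c in Dp, Dl'.
      assert (Hmaj : / c (x1 s - q) <= psi b r delta n (1 * x1 s + 1 * x2 s + - q)).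
      { rewrite (Drep n b r Hdat). replace (x1 s - q) with ((1 * x1 s + 1 * x2 s + - q) - x2 s) by ring.
        apply psi_maj. lra. apply Hx2; lra. }
      set (ps := psi b r delta n (1 * x1 s + 1 * x2 s + - q)) in *.
      set (Dv := / c (x1 s - q)) in *.
      pose proof (gamma_bnd (d1 s + d2 s) (d2 s) e ltac:(lra) W1 Se) as Gb.
      unfold gamma, Rdiv. fold Dv.
      set (gm := (sqrt (d1 s + d2 s) + sqrt (d2 s)) ^ 2) in *.
      assert (gm * Dv <= ((1 + e) * (d1 s + d2 s) + (1 + / e) * d2 s) * Dv) by (apply Rmult_le_compat_r; lra).
      assert (Hie : 0 < / e) by (apply Rinv_0_lt_compat; auto).
      assert ((d1 s + d2 s) * Dv <= (d1 s + d2 s) * ps) by (apply Rmult_le_compat_l; lra).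
      assert ((e * (d1 s + d2 s) + (1 + / e) * d2 s) * Dv <= (e * (d1 s + d2 s) + (1 + / e) * d2 s) * Dmx).
      { apply Rmult_le_compat_l; auto. assert (0 <= e * (d1 s + d2 s)) by (apply Rmult_le_pos; lra).
        assert (0 <= (1 + / e) * d2 s) by (apply Rmult_le_pos; lra). lra. }
      unfold be1, be2. nra. }
    assert (HL2 : 1 * Phi b r delta n ((z - a) * 1 + a - q) - 1 * Phi b r delta n ((z - a) * 0 + a - q) <= v2).
    { apply (straightLB n b r q Hdat delta ltac:(lra) 1 (z - a) a (fun s => gamma (z - a) (0 - 0) / c ((z - a) * s + a - q)) v2); [lra| |auto].
      intros s. rewrite Rminus_0_r, gamma_x0 by lra. unfold Rdiv. fold c. lra. }
    pose proof (Psi_Phi b r delta ltac:(lra) n (z - q) (a - q)) as PP. fold K in PP.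
    replace (1 * z + 1 * delta + - q) with (z - q + delta) in HB1 by ring.
    replace (1 * a + 1 * 0 + - q) with (a - q) in HB1 by ring.
    replace ((z - a) * 1 + a - q) with (z - q) in HL2 by ring.
    replace ((z - a) * 0 + a - q) with (a - q) in HL2 by ring.
    unfold be1, be2 in HB1.
    assert (T1 : delta * K <= e * K) by (apply Rmult_le_compat_r; lra).
    assert (T2 : Dmx * e * (z - a) <= Dmx * e * z) by (apply Rmult_le_compat_l; nra).
    assert (T3 : Dmx * (e + (1 + / e)) * delta <= Dmx * (3 * e)).
    { rewrite Rmult_assoc. apply Rmult_le_compat_l; auto. replace ((e + (1 + / e)) * delta) with (e * delta + delta + / e * delta) by ring.
      rewrite Sinv. nra. }
    assert (T4 : Dmx * e * w >= 0) by (apply Rle_ge; apply Rmult_le_pos; nra).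
    nra.
  - intros delta b0 Hd Hb0.
    destruct (sqrt_facts delta Hd) as (Se & Se2 & Se1 & Sde & Sinv).
    set (e := sqrt delta) in *.
    destruct (Gexists n b r q Hdat (- b0) b0 (- w) (w + delta)) as (G1 & v1 & HG1 & _ & _).
    { split; lra. }
    destruct (Gexists n b r q Hdat (- b0) b0 (- w) w) as (G2 & v2 & HG2 & Hv2 & Hv2G).
    { split; lra. }
    exists G1, G2. split; auto. split; auto.
    set (be1 := Dmx * (1 + / e)). set (be2 := Dmx * (e + (1 + / e))).
    assert (HB1 : G1 <= (-1 * Psi b r delta n (0 * - w + -1 * (w + delta) + (delta - q)) + be1 * - w + be2 * (w + delta))
                      - (-1 * Psi b r delta n (0 * - b0 + -1 * b0 + (delta - q)) + be1 * - b0 + be2 * b0)).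
    { apply (proj2 HG1). intros v (x1 & x2 & d1 & d2 & Had & E1 & E2 & E3 & E4 & Hv).
      simpl in E1, E2, E3, E4.
      pose proof Had as (C1 & C2 & k & p & Hp & Hpc).
      assert (Hmono := mono (fun s => x1 s + x2 s) (fun s => d1 s + d2 s) k p Hp (cont_on01_plus _ _ C1 C2)).
      assert (Hu : forall s, 0 <= s <= 1 -> 0 <= x1 s + x2 s <= delta).
      { intros s Hs.
        assert (x1 0 + x2 0 <= x1 s + x2 s <= x1 1 + x2 1); [|lra].
        apply Hmono; auto.
        intros i Hi s' Hs'. destruct (Hpc i Hi) as (Hd' & _). destruct (Hd' s' Hs') as (D1 & D2 & W1 & W2).
        split. exact (derivable_pt_lim_plus _ _ _ _ _ D1 D2). lra. }
      enough (Hfin : v <= (-1 * Psi b r delta n (0 * x1 1 + -1 * x2 1 + (delta - q)) + be1 * x1 1 + be2 * x2 1)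
                      - (-1 * Psi b r delta n (0 * x1 0 + -1 * x2 0 + (delta - q)) + be1 * x1 0 + be2 * x2 0)).
      { rewrite E1, E2, E3, E4 in Hfin. exact Hfin. }
      apply (GEN (Psi b r delta n) (psi b r delta n) (Psi_deriv b r delta ltac:(lra) n) (psi_cont b r delta ltac:(lra) n)
               (fun s => gamma (d1 s) (d2 s) / c (x1 s - q)) x1 x2 d1 d2 (-1) 0 (-1) (delta - q) be1 be2 Had); auto.
      intros s Hs [W1 W2].
      pose proof (Dpos n b r Hdat (x1 s - q)) as Dp. pose proof (Dle n b r Hdat (x1 s - q)) as Dl'.
      fold c in Dp, Dl'.
      assert (Hmaj : / c (x1 s - q) <= psi b r delta n (0 * x1 s + -1 * x2 s + (delta - q))).
      { rewrite (Drep n b r Hdat). replace (x1 s - q) with ((0 * x1 s + -1 * x2 s + (delta - q)) - (delta - (x1 s + x2 s))) by ring.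
        apply psi_maj. lra. pose proof (Hu s ltac:(lra)). lra. }
      set (ps := psi b r delta n (0 * x1 s + -1 * x2 s + (delta - q))) in *.
      set (Dv := / c (x1 s - q)) in *.
      pose proof (gamma_bnd (d2 s) (d1 s + d2 s) e W1 ltac:(lra) Se) as Gb.
      unfold gamma, Rdiv. fold Dv.
      replace (sqrt (d1 s + d2 s) + sqrt (d2 s)) with (sqrt (d2 s) + sqrt (d1 s + d2 s)) by ring.
      set (gm := (sqrt (d2 s) + sqrt (d1 s + d2 s)) ^ 2) in *.
      assert (gm * Dv <= ((1 + e) * d2 s + (1 + / e) * (d1 s + d2 s)) * Dv) by (apply Rmult_le_compat_r; lra).
      assert (Hie : 0 < / e) by (apply Rinv_0_lt_compat; auto).
      assert (d2 s * Dv <= d2 s * ps) by (apply Rmult_le_compat_l; lra).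
      assert ((e * d2 s + (1 + / e) * (d1 s + d2 s)) * Dv <= (e * d2 s + (1 + / e) * (d1 s + d2 s)) * Dmx).
      { apply Rmult_le_compat_l; auto. assert (0 <= e * d2 s) by (apply Rmult_le_pos; lra).
        assert (0 <= (1 + / e) * (d1 s + d2 s)) by (apply Rmult_le_pos; lra). lra. }
      unfold be1, be2. nra. }
    assert (HL2 : -1 * Phi b r delta n ((- w - - b0) * 1 + - b0 - q) - -1 * Phi b r delta n ((- w - - b0) * 0 + - b0 - q) <= v2).
    { apply (straightLB n b r q Hdat delta ltac:(lra) (-1) (- w - - b0) (- b0)
         (fun s => gamma (- w - - b0) (w - b0) / c ((- w - - b0) * s + - b0 - q)) v2); [lra| |auto].
      intros s. replace (- w - - b0) with (- (w - b0)) by ring. rewrite gamma_neg by lra.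
      unfold Rdiv. fold c. lra. }
    pose proof (Psi_Phi b r delta ltac:(lra) n (- b0 - q) (- w - q)) as PP. fold K in PP.
    replace (0 * - w + -1 * (w + delta) + (delta - q)) with (- w - q) in HB1 by ring.
    replace (0 * - b0 + -1 * b0 + (delta - q)) with (- b0 - q + delta) in HB1 by ring.
    replace ((- w - - b0) * 1 + - b0 - q) with (- w - q) in HL2 by ring.
    replace ((- w - - b0) * 0 + - b0 - q) with (- b0 - q) in HL2 by ring.
    unfold be1, be2 in HB1.
    assert (T1 : delta * K <= e * K) by (apply Rmult_le_compat_r; lra).
    assert (T2 : Dmx * (1 + / e) * (b0 - w) + Dmx * (e + (1 + / e)) * (w + delta - b0)
                 = Dmx * (e * (w - b0) + e * delta + delta + / e * delta)) by ring.
    rewrite Sinv in T2.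
    assert (T3 : Dmx * (e * (w - b0) + e * delta + delta + e) <= Dmx * (e * w + 3 * e)).
    { apply Rmult_le_compat_l; auto. nra. }
    assert (T4 : Dmx * e * z >= 0) by (apply Rle_ge; apply Rmult_le_pos; nra).
    nra.
Qed.
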